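(* Let $N\ge1$ and let the parameter space $\Theta$ of the correlated Bernoulli random graph model be nondegenerate. Suppose $S:\mathcal{X}\to\mathbb{R}$ is an unbiased estimator of $g(\theta)$ and $S':\mathcal{X}\to\mathbb{R}$ is an unbiased estimator of $g'(\theta)$, where $g,g':\Theta\to\mathbb{R}$. Then for any $a,b\in\mathbb{R}$, $a\overline{S}+b\overline{S'}$ is the UMVU estimator of $ag(\theta)+bg'(\theta)$. Moreover, $a\overline{S}+b\overline{S'}$ is balanced, $\overline{S}\cdot\overline{S'}$ is balanced, and (if $\overline{S'}$ is nowhere zero) $\overline{S}/\overline{S'}$ is balanced.
   Context: Correlated Bernoulli random graph model: fix a positive integer $N$ and let $\mathcal{R}=\{(p_1,\dots,p_N,\varrho_1,\dots,\varrho_N): p_i,\varrho_i\in[0,1]\}$; a parameter space is any $\Theta\subseteq\mathcal{R}$. For $\theta\in\Theta$, the pairs $(X_i,Y_i)$, $i=1,\dots,N$, of $\{0,1\}$-valued random variables are independent, $X_i,Y_i$ are marginally Bernoulli$(p_i)$ with Pearson correlation $\varrho_i$. Sample space $\mathcal{X}=\{(x,y):x,y\in\{0,1\}^N\}$. Let $\mathcal{R}^o=\{(p_1,\dots,p_N,0,\dots,0):p_i\in\mathbb{R}\}$; $\Theta$ is nondegenerate if $\Theta\cap\mathcal{R}^o$ has an interior point relative to $\mathcal{R}^o$. The disagreement vector $\mathcal{H}:\mathcal{X}\to\{0,\star,1\}^N$ has $i$th component $1$ if $x_i=y_i=1$, $0$ if $x_i=y_i=0$, $\star$ if $x_i\neq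 y_i$; $\mathcal{X}_h=\mathcal{H}^{-1}(h)$. The balanced variant of a statistic $S$ is $\overline{S}(x,y)=\frac{1}{|\mathcal{X}_h|}\sum_{(x',y')\in\mathcal{X}_h}S(x',y')$ with $h=\mathcal{H}(x,y)$; $S$ is called balanced if $S=\overline{S}$, i.e. $S$ is constant on each $\mathcal{X}_h$. An estimator $S$ is unbiased for $g$ if $\mathbb{E}_\theta S=g(\theta)$ for all $\theta\in\Theta$; UMVU means unbiased with minimum variance among unbiased estimators for every $\theta\in\Theta$. *)

(* Defs.v *)
From mathcomp Require Import all_boot all_order all_algebra.
From mathcomp Require Import reals.
Set Implicit Arguments. Unset Strict Implicit. Unset Printing Implicit Defensive.
Import Order.TTheory GRing.Theory Num.Theory.
Local Open Scope ring_scope.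

Section CBRG.
Variables (R : realType) (N : nat).

(* parameter theta = (p_1..p_N, rho_1..rho_N) *)
Definition param := ({ffun 'I_N -> R} * {ffun 'I_N -> R})%type.

(* sample space X = {(x,y) : x,y in {0,1}^N}, 1 = true *)
Definition sample := ({ffun 'I_N -> bool} * {ffun 'I_N -> bool})%type.

Definition in_Rspace (th : param) : Prop :=
  forall i, 0 <= th.1 i <= 1 /\ 0 <= th.2 i <= 1.

(* Theta nondegenerate: Theta ∩ R^o has an interior point relative to R^o
   (R^o identified with R^N via p, with the sup-norm topology). *)
Definition nondegenerate_param (Theta : param -> Prop) : Prop :=
  exists (p0 : {ffun 'I_N -> R}) (eps : R), 0 < eps /\
    forall p : {ffun 'I_N -> R}, (forall i, `|p i - p0 i| < eps) ->
      Theta (p, [ffun=> 0]).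

(* joint law of a pair (X_i,Y_i), marginals Bernoulli(p), correlation rho *)
Definition pair_prob (p rho : R) (a b : bool) : R :=
  match a, b with
  | true, true => p ^+ 2 + rho * p * (1 - p)
  | false, false => (1 - p) ^+ 2 + rho * p * (1 - p)
  | _, _ => p * (1 - p) * (1 - rho)
  end.

Definition pmf (th : param) (z : sample) : R :=
  \prod_(i < N) pair_prob (th.1 i) (th.2 i) (z.1 i) (z.2 i).

Definition expect (th : param) (S : sample -> R) : R :=
  \sum_(z : sample) S z * pmf th z.

Definition variance (th : param) (S : sample -> R) : R :=
  expect th (fun z => (S z - expect th S) ^+ 2).

Definition unbiased (Theta : param -> Prop) (S : sample -> R) (g : param -> R) :=
  forall th, Theta th -> expect th S = g th.

Definition UMVU (Theta : param -> Prop) (S : sample -> R) (g : param -> R) :=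
  unbiased Theta S g /\
  forall T : sample -> R, unbiased Theta T g ->
    forall th, Theta th -> variance th S <= variance th T.

(* disagreement vector: Some true = 1, Some false = 0, None = star *)
Definition disagree (z : sample) : {ffun 'I_N -> option bool} :=
  [ffun i => if z.1 i == z.2 i then Some (z.1 i) else None].

Definition fiber (h : {ffun 'I_N -> option bool}) : {set sample} :=
  [set z | disagree z == h].

Definition balanced_variant (S : sample -> R) (z : sample) : R :=
  (#|fiber (disagree z)|%:R)^-1 * \sum_(z' in fiber (disagree z)) S z'.

Definition balanced (S : sample -> R) : Prop :=
  S = balanced_variant S.

End CBRG.

(* Main.v *)
Require Import Defs.
From mathcomp Require Import all_boot all_order all_algebra.
From mathcomp Require Import reals.
From mathcomp Require Import ring lra zify.
From Stdlib Require Import FunctionalExtensionality.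
Import Order.TTheory GRing.Theory Num.Theory.
Local Open Scope ring_scope.
Set Implicit Arguments. Unset Strict Implicit. Unset Printing Implicit Defensive.

Section Aux.
Variables (R : realType) (N : nat).
Implicit Types (T U : sample N -> R) (th : param R N) (z : sample N).

Definition bv (T : sample N -> R) (h : {ffun 'I_N -> option bool}) : R :=
  (#|fiber h|%:R)^-1 * \sum_(z' in fiber h) T z'.

Lemma bvE T z : balanced_variant T z = bv T (disagree z).
Proof. by []. Qed.

Lemma sum_fiber (G : sample N -> R) :
  \sum_z G z = \sum_(h : {ffun 'I_N -> option bool}) \sum_(z in fiber h) G z.
Proof.
rewrite (partition_big (fun z => disagree z) predT) //=.
apply: eq_bigr => h _; apply: eq_bigl => z; by rewrite inE.
Qed.

Lemma sum_fiber_bv T h : \sum_(z in fiber h) bv T (disagree z) = \sum_(z in fiber h) T z.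
Proof.
rewrite (eq_bigr (fun _ => bv T h)); last by move=> z; rewrite inE => /eqP->.
rewrite sumr_const /bv -[LHS]mulr_natr mulrAC.
have [n0|n0] := eqVneq #|fiber h| 0%N.
  by rewrite (cards0_eq n0) big_set0 mulr0.
by rewrite mulVf ?mul1r // pnatr_eq0.
Qed.

Lemma orth T (F : {ffun 'I_N -> option bool} -> R) :
  \sum_z (T z - balanced_variant T z) * F (disagree z) = 0.
Proof.
rewrite sum_fiber big1 // => h _.
rewrite (eq_bigr (fun z => (T z - bv T (disagree z)) * F h)); last first.
  by move=> z; rewrite inE => /eqP <-.
by rewrite -mulr_suml sumrB sum_fiber_bv subrr mul0r.
Qed.

Definition pp (p r : R) (d : option bool) : R :=
  match d with
  | Some true => p ^+ 2 + r * p * (1 - p)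
  | Some false => (1 - p) ^+ 2 + r * p * (1 - p)
  | None => p * (1 - p) * (1 - r)
  end.

Lemma pair_ppE p r a b : pair_prob p r a b = pp p r (if a == b then Some a else None).
Proof. by case: a; case: b. Qed.

Lemma pmfE th z : pmf th z = \prod_i pp (th.1 i) (th.2 i) (disagree z i).
Proof. by apply: eq_bigr => i _; rewrite pair_ppE /disagree ffunE. Qed.

Lemma pp_ge0 p r d : 0 <= p <= 1 -> 0 <= r <= 1 -> 0 <= pp p r d.
Proof.
move=> /andP[p0 p1] /andP[r0 r1].
have h1 : 0 <= p * (1 - p) by apply: mulr_ge0; lra.
case: d => [[]|] /=.
- by apply: addr_ge0; [apply: sqr_ge0| rewrite -mulrA; apply: mulr_ge0].
- by apply: addr_ge0; [apply: sqr_ge0| rewrite -mulrA; apply: mulr_ge0].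
- by apply: mulr_ge0 => //; lra.
Qed.

Lemma pmf_ge0 th z : in_Rspace th -> 0 <= pmf th z.
Proof.
move=> hth; rewrite pmfE; apply: prodr_ge0 => i _.
by case: (hth i) => ? ?; apply: pp_ge0.
Qed.

Lemma expect_bv th T : expect th (balanced_variant T) = expect th T.
Proof.
apply/eqP; rewrite -subr_eq0; apply/eqP.
rewrite /expect -sumrB.
have H := orth T (fun h => \prod_i pp (th.1 i) (th.2 i) (h i)).
rewrite -[RHS]oppr0 -[in RHS]H -sumrN.
apply: eq_bigr => z _; rewrite pmfE; ring.
Qed.

Lemma var_bv th T : in_Rspace th ->
  variance th (balanced_variant T) <= variance th T.
Proof.
move=> hth; rewrite /variance expect_bv.
set m := expect th T.
set F := fun h : {ffun 'I_N -> option bool} =>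
   2 * (bv T h - m) * \prod_i pp (th.1 i) (th.2 i) (h i).
have eq1 : expect th (fun z => (T z - m) ^+ 2) =
   expect th (fun z => (balanced_variant T z - m) ^+ 2) +
   \sum_z (T z - balanced_variant T z) ^+ 2 * pmf th z +
   \sum_z (T z - balanced_variant T z) * F (disagree z).
  rewrite /expect -!big_split /=; apply: eq_bigr => z _.
  rewrite /F -pmfE bvE; ring.
rewrite eq1 orth addr0 lerDl; apply: sumr_ge0 => z _.
by apply: mulr_ge0; [apply: sqr_ge0 | apply: pmf_ge0].
Qed.

Lemma balanced_of (F : sample N -> R) (F' : {ffun 'I_N -> option bool} -> R) :
  (forall z, F z = F' (disagree z)) -> balanced F.
Proof.
move=> hF; apply: functional_extensionality => z.
rewrite /balanced_variant.
rewrite (eq_bigr (fun _ => F z)); last first.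
  by move=> z'; rewrite inE => /eqP e; rewrite !hF e.
rewrite sumr_const -(mulr_natl (F z)) mulrA mulVf ?mul1r // pnatr_eq0 -lt0n.
by apply/card_gt0P; exists z; rewrite inE.
Qed.

End Aux.
Lemma digits_inj m : forall f g : nat -> nat, (forall i, (f i < 3)%N) ->
  (forall i, (g i < 3)%N) ->
  (\sum_(0 <= i < m) f i * 3 ^ i = \sum_(0 <= i < m) g i * 3 ^ i)%N ->
  forall i, (i < m)%N -> f i = g i.
Proof.
elim: m => [//|m IH] f g hf hg.
have sh : forall h : nat -> nat, (\sum_(0 <= i < m) h i.+1 * 3 ^ i.+1 =
    3 * \sum_(0 <= i < m) h i.+1 * 3 ^ i)%N.
  move=> h; rewrite big_distrr /=; apply: eq_bigr => i _; rewrite expnS; lia.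
rewrite !big_nat_recl // !sh expn0 !muln1 => e.
have f0 := hf 0%N; have g0 := hg 0%N.
have e0 : f 0%N = g 0%N by lia.
have e1 : (\sum_(0 <= i < m) f i.+1 * 3 ^ i = \sum_(0 <= i < m) g i.+1 * 3 ^ i)%N by lia.
case=> [|i] //= hi.
exact: (IH (fun j => f j.+1) (fun j => g j.+1)).
Qed.

Section Aux2.
Variables (R : realType) (N : nat).
Implicit Types (th : param R N) (z : sample N).

Definition ee (d : option bool) : nat :=
  match d with Some true => 2 | None => 1 | Some false => 0 end%N.

Lemma ee_lt3 d : (ee d < 3)%N. Proof. by case: d => [[]|]. Qed.
Lemma ee_inj : injective ee. Proof. by case=> [[]|]; case=> [[]|]. Qed.

Definition nn z : nat := (\sum_(i < N) ee (disagree z i) * 3 ^ i)%N.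

Lemma nn_inj z z' : nn z = nn z' -> disagree z = disagree z'.
Proof.
pose f (y : sample N) (i : nat) :=
  if (insub i : option 'I_N) is Some j then ee (disagree y j) else 0%N.
have nf y : nn y = (\sum_(0 <= i < N) f y i * 3 ^ i)%N.
  by rewrite big_mkord; apply: eq_bigr => i _; rewrite /f valK.
have hf y i : (f y i < 3)%N by rewrite /f; case: insub => // j; apply: ee_lt3.
rewrite !nf => e; apply/ffunP => j.
have := digits_inj (hf z) (hf z') e (ltn_ord j).
by rewrite /f valK => /ee_inj.
Qed.

Definition cc (x : R) (d : option bool) : R :=
  match d with Some true => x ^+ 2 | Some false => (1 - x) ^+ 2 | None => x * (1 - x) end.

Lemma cc_gt0 x d : 0 < x < 1 -> 0 < cc x d.
Proof.
move=> /andP[x0 x1]; case: d => [[]|] /=.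
- by apply: exprn_gt0.
- by apply: exprn_gt0; lra.
- by apply: mulr_gt0; lra.
Qed.

Definition pr (x w : R) := x * w / (1 - x + x * w).

Lemma pp_pr x w d : 0 < x < 1 -> 0 <= w ->
  pp (pr x w) 0 d = cc x d * w ^+ ee d / (1 - x + x * w) ^+ 2.
Proof.
move=> /andP[x0 x1] w0.
have D0 : 1 - x + x * w != 0.
  have : 0 <= x * w by apply: mulr_ge0; lra.
  move=> h; apply/negP => /eqP h'; lra.
rewrite /pr; case: d => [[]|] /=; field => //.
Qed.

Lemma pr_close x w : 0 < x < 1 -> 0 <= w <= 1 -> `|pr x w - x| <= 1 - w.
Proof.
move=> /andP[x0 x1] /andP[w0 w1].
have xw : 0 <= x * w by apply: mulr_ge0; lra.
have D0 : 0 < 1 - x + x * w by lra.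
have e : x - pr x w = x * (1 - x) * (1 - w) / (1 - x + x * w).
  rewrite /pr; field; lra.
rewrite distrC e ger0_norm; last first.
  apply: divr_ge0; last lra.
  apply: mulr_ge0; last lra; apply: mulr_ge0; lra.
rewrite ler_pdivrMr //.
have h1 : 0 <= (1 - x) * (1 - w) by apply: mulr_ge0; lra.
have h2 : 0 <= x * w * (1 - w) by apply: mulr_ge0; lra.
nra.
Qed.

Lemma bern (u : R) k : 0 <= u <= 1 -> 1 - u ^+ k <= k%:R * (1 - u).
Proof.
move=> /andP[u0 u1]; elim: k => [|k IH]; first by rewrite expr0 subrr mul0r.
have w0 : 0 <= u ^+ k by apply: exprn_ge0.
have w1 : u ^+ k <= 1 by apply: exprn_ile1.
have h : 0 <= (1 - u) * (1 - u ^+ k) by apply: mulr_ge0; lra.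
rewrite exprS -addn1 natrD; nra.
Qed.

End Aux2.

Section Complete.
Variables (R : realType) (N : nat).
Implicit Types (th : param R N) (z : sample N).

Lemma complete (Theta : param R N -> Prop)
  (hTheta : forall th, Theta th -> in_Rspace th)
  (hnd : nondegenerate_param Theta)
  (U : sample N -> R) (U' : {ffun 'I_N -> option bool} -> R) :
  (forall z, U z = U' (disagree z)) ->
  (forall th, Theta th -> expect th U = 0) -> forall z, U z = 0.
Proof.
move=> hU hexp.
case: hnd => p0 [eps [eps0 hball]].
have p0in : forall i, 0 < p0 i < 1.
  move=> i.
  have b1 : forall j, `|[ffun j => if j == i then p0 j - eps/2 else p0 j] j - p0 j| < eps.
    move=> j; rewrite ffunE; case: eqP => _; last by rewrite subrr normr0.
    rewrite (_ : p0 j - eps / 2 - p0 j = - (eps / 2)); last by ring.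
    rewrite normrN ger0_norm; lra.
  have b2 : forall j, `|[ffun j => if j == i then p0 j + eps/2 else p0 j] j - p0 j| < eps.
    move=> j; rewrite ffunE; case: eqP => _; last by rewrite subrr normr0.
    rewrite (_ : p0 j + eps / 2 - p0 j = (eps / 2)); last by ring.
    rewrite ger0_norm; lra.
  case: (hTheta _ (hball _ b1) i) => /= + _; rewrite ffunE eqxx => /andP[ha _].
  case: (hTheta _ (hball _ b2) i) => /= + _; rewrite ffunE eqxx => /andP[_ hb].
  apply/andP; split; lra.
pose K : R := (3 ^ N)%:R.
have K1 : 1 <= K by rewrite /K (_ : 1 = 1%:R) // ler_nat expn_gt0.
pose A z := \prod_i cc (p0 i) (disagree z i).
have A0 z : 0 < A z by apply: prodr_gt0 => i _; apply: cc_gt0.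
pose P : {poly R} := \sum_z (U z * A z) *: 'X^(nn z).
have Peval : forall u, 0 < u <= 1 -> K * (1 - u) < eps -> P.[u] = 0.
  move=> u /andP[u0 u1] hK.
  pose w (i : 'I_N) := u ^+ (3 ^ i).
  have w01 i : 0 <= w i <= 1.
    by apply/andP; split; [apply: exprn_ge0; lra| apply: exprn_ile1; lra].
  pose pf := [ffun i => pr (p0 i) (w i)].
  have Th : Theta (pf, [ffun=> 0]).
    apply: hball => i; rewrite ffunE.
    apply: (le_lt_trans (pr_close (p0in i) (w01 i))).
    apply: (le_lt_trans (bern _ _)); first lra.
    apply: le_lt_trans hK; apply: ler_wpM2r; first lra.
    by rewrite ler_nat leq_pexp2l // ltnW.
  have E := hexp _ Th.
  pose D (i : 'I_N) := 1 - p0 i + p0 i * w i.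
  have D0 i : 0 < D i.
    have := p0in i; have := w01 i => /andP[? ?] /andP[? ?].
    have : 0 <= p0 i * w i by apply: mulr_ge0; lra.
    rewrite /D; lra.
  pose C := \prod_i D i ^+ 2.
  have C0 : C != 0 by apply: lt0r_neq0; apply: prodr_gt0 => i _; apply: exprn_gt0.
  have pmfu z : pmf (pf, [ffun=> 0]) z = A z * u ^+ (nn z) / C.
    rewrite pmfE.
    rewrite (eq_bigr (fun i => cc (p0 i) (disagree z i) * w i ^+ ee (disagree z i) / D i ^+ 2)); last first.
      by move=> i _; rewrite /= !ffunE pp_pr ?p0in //; case/andP: (w01 i).
    rewrite !big_split /= prodfV /A /nn -prodrXr; congr (_ * _ * _).
    by apply: eq_bigr => i _; rewrite /w -exprM mulnC.
  have : P.[u] / C = 0.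
    rewrite -E /expect /P horner_sum mulr_suml; apply: eq_bigr => z _.
    by rewrite hornerZ hornerXn pmfu; field.
  by move/eqP; rewrite mulf_eq0 invr_eq0 (negbTE C0) orbF => /eqP.
have P0 : P = 0.
  apply/eqP; apply/negP => /negP Pn0.
  pose M := size P.
  have M0 : 0 < M%:R :> R by rewrite ltr0n lt0n size_poly_eq0.
  pose e' := eps / (1 + eps).
  have e'0 : 0 < e' by apply: divr_gt0; lra.
  have e'1 : e' < 1 by rewrite ltr_pdivrMr; lra.
  have e'e : e' < eps by rewrite ltr_pdivrMr; nra.
  pose d := e' / (K * M%:R).
  have d0 : 0 < d by apply: divr_gt0 => //; apply: mulr_gt0; lra.
  pose rs := [seq 1 - j%:R * d | j <- iota 0 M].
  suff HH : (size rs < size P)%N by move: HH; rewrite size_map size_iota ltnn.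
  apply: max_poly_roots Pn0 _ _.
    apply/allP => r /mapP[j]; rewrite mem_iota add0n => /andP[_ jM] ->.
    pose x := j%:R / M%:R : R.
    have x0 : 0 <= x by apply: divr_ge0.
    have x1 : x < 1 by rewrite ltr_pdivrMr // mul1r ltr_nat.
    have ejd : K * (j%:R * d) = e' * x.
      rewrite /d /x; field; apply/andP; split; apply: lt0r_neq0 => //; lra.
    have jd0 : 0 <= j%:R * d by apply: mulr_ge0 => //; lra.
    have jdK : j%:R * d <= K * (j%:R * d) by rewrite ler_peMl.
    have ex : e' * x < e' by rewrite gtr_pMr.
    apply/eqP; apply: Peval; last by rewrite (_ : 1 - (1 - j%:R * d) = j%:R * d); [lra|ring].
    apply/andP; split; lra.
  rewrite map_inj_uniq ?iota_uniq // => i j /eqP.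
  rewrite -subr_eq0 (_ : 1 - i%:R * d - (1 - j%:R * d) = (j%:R - i%:R) * d); last by ring.
  rewrite mulf_eq0 (negbTE (lt0r_neq0 d0)) orbF subr_eq0 eqr_nat => /eqP; lia.
move=> z0.
have : P`_(nn z0) = 0 by rewrite P0 coef0.
rewrite /P coef_sum.
under eq_bigr => z _ do rewrite coefZ coefXn.
rewrite (eq_bigr (fun z => U z0 * A z0 * (nn z0 == nn z)%:R)); last first.
  move=> z _; case: eqP => [e|]; last by rewrite !mulr0.
  by rewrite hU (hU z0) /A (nn_inj e).
rewrite -mulr_sumr => /eqP; rewrite !mulf_eq0 (negbTE (lt0r_neq0 (A0 z0))) orbF.
case/orP => [/eqP //|].
rewrite (bigD1 z0) //= eqxx => /eqP h.
have : 0 <= \sum_(z | z != z0) ((nn z0 == nn z)%:R : R) by apply: sumr_ge0.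
have : (true%:R : R) = 1 by [].
lra.
Qed.

End Complete.

Lemma expect_lin (R : realType) (N : nat) (th : param R N) (F G : sample N -> R) (a b : R) :
  expect th (fun z => a * F z + b * G z) = a * expect th F + b * expect th G.
Proof. rewrite /expect !mulr_sumr -big_split; apply: eq_bigr => z _ /=; ring. Qed.

Lemma expect_sub (R : realType) (N : nat) (th : param R N) (F G : sample N -> R) :
  expect th (fun z => F z - G z) = expect th F - expect th G.
Proof. rewrite /expect -sumrB; apply: eq_bigr => z _ /=; ring. Qed.

Theorem corollary1 (R : realType) (N : nat) (hN : (0 < N)%N)
  (Theta : param R N -> Prop)
  (hTheta : forall th, Theta th -> in_Rspace th)
  (hnd : nondegenerate_param Theta)
  (S S' : sample N -> R) (g g' : param R N -> R) :
  unbiased Theta S g -> unbiased Theta S' g' ->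
  forall a b : R,
    let Sb := balanced_variant S in
    let Sb' := balanced_variant S' in
    UMVU Theta (fun z => a * Sb z + b * Sb' z) (fun th => a * g th + b * g' th)
    /\ balanced (fun z => a * Sb z + b * Sb' z)
    /\ balanced (fun z => Sb z * Sb' z)
    /\ ((forall z, Sb' z != 0) -> balanced (fun z => Sb z / Sb' z)).
Proof.
move=> hS hS' a b Sb Sb'.
have unb : unbiased Theta (fun z => a * Sb z + b * Sb' z) (fun th => a * g th + b * g' th).
  move=> th hth; rewrite expect_lin /Sb /Sb' !expect_bv hS // hS' //.
split; [split => // T hT th hth|split; [|split]].
- have eqT : forall z, a * Sb z + b * Sb' z - balanced_variant T z = 0.
    apply: (complete hTheta hnd
      (U' := fun h => a * bv S h + b * bv S' h - bv T h)) => // th' hth'.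
    by rewrite expect_sub unb // expect_bv hT // subrr.
  rewrite (functional_extensionality (fun z => a * Sb z + b * Sb' z)
     (balanced_variant T)); last by move=> z; apply/eqP; rewrite -subr_eq0 eqT.
  exact: var_bv (hTheta _ hth).
- exact: (balanced_of (F' := fun h => a * bv S h + b * bv S' h)).
- exact: (balanced_of (F' := fun h => bv S h * bv S' h)).
- move=> _; exact: (balanced_of (F' := fun h => bv S h / bv S' h)).
Qed.
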